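(* Let $A$ be a finite set, $\bot,\dagger\notin A$ distinct extra symbols, $N\geq1$, and let $\mathsf L$, $p_x=p(-|x)$, $\pi$, $T(\bot)$ and the generalized metric space $\mathcal M$ be as in the context. Then for every $t>0$, $$\operatorname{Mag}(t\mathcal M)=(t-1)\sum_{x\in\mathsf L\setminus T(\bot)}H_t(p_x)+\#T(\bot),$$ where $H_t(p)=\frac{1}{t-1}\bigl(1-\sum_i p_i^t\bigr)$ is the Tsallis $t$-entropy (for $t=1$, $H_1$ is the Shannon entropy, so the first term vanishes).
   Context: $A^*$ is the set of finite strings over $A$, $|x|$ denotes length (with $\bot,\dagger$ counted). $\mathsf L=\{\bot a : a\in A^*,\ |a|\leq N-1\}\sqcup\{\bot a\dagger : a\in A^*,\ |a|<N-1\}$, partially ordered by the prefix relation ($x\leq y$ iff $y=xa'$ for some string $a'$). Strings $\bot a$ are unfinished texts, $\bot a\dagger$ finished texts. For each unfinished text $x\in\mathsf L$ with $|x|\leq N-1$ a probability mass function $p_x=p(-|x)$ on $A\cup\{\dagger\}$ is given. Define $\pi(y|x)=1$ if $x=y$; $0$ if $x\not\leq y$; and if $x=\bot a_1\cdots a_t$ is a proper prefix of $y=xa_{t+1}\cdots a_{t+k}$, $\pi(y|x)=\prod_{i=1}^k p(a_{t+i}\mid\bot a_1\cdots a_{t+i-1})$. $T(\bot)$ is the set of elements of $\mathsf L$ that are either unfinished texts of length $N$ or finished texts (so $\mathsf L\setminus T(\bot)$ is the set of unfinished texts of length $\leq N-1$). $\mathcal M$ is the generalized metric space with point set $\mathsf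 L$ and $d(x,y)=-\ln\pi(y|x)\in[0,\infty]$. For $t>0$, $t\mathcal M$ has distances $t\,d$, and its magnitude is $\operatorname{Mag}(t\mathcal M)=\sum_{x,y\in\mathsf L}\zeta_t^{-1}(x,y)$, where $\zeta_t$ is the (invertible) matrix $\zeta_t(x,y)=e^{-t d(x,y)}=\pi(y|x)^t$ with $e^{-\infty}=0$. *)

(* Defs.v *)
From HB Require Import structures.
From mathcomp Require Import all_boot all_order all_algebra.
From mathcomp Require Import all_classical all_reals all_analysis.
Set Implicit Arguments. Unset Strict Implicit. Unset Printing Implicit Defensive.
Import Order.TTheory GRing.Theory Num.Theory.
Local Open Scope ring_scope.

(* A word a in A^* with |a| <= N-1, stored as (k, k-tuple) with k < N. *)
Definition word (A : finType) (N : nat) := {k : 'I_N & k.-tuple A}.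

(* Candidate texts: a word a together with a flag saying whether the text is
   finished (i.e. ends with the symbol dagger).  The bottom symbol is implicit
   (every text starts with it).  Text (a,false) is  ⊥a, text (a,true) is ⊥a†. *)
Definition Lpred (A : finType) (N : nat) : pred (word A N * bool) :=
  fun x => x.2 ==> (tag x.1 < N.-1)%N.

Definition L (A : finType) (N : nat) := {x : word A N * bool | Lpred x}.

Section Texts.
Variables (A : finType) (N : nat).

Definition letters (x : L A N) : seq A := val (tagged (val x).1).
Definition finished (x : L A N) : bool := (val x).2.
(* the symbol string of x after ⊥ ; None stands for the dagger symbol *)
Definition syms (x : L A N) : seq (option A) :=
  map Some (letters x) ++ (if finished x then [:: None] else [::]).
(* |x| : length, counting ⊥ and † *)
Definition tlen (x : L A N) : nat := (size (syms x)).+1.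
Definition text_le (x y : L A N) : bool := prefix (syms x) (syms y).
Definition inT (x : L A N) : bool := finished x || (tlen x == N).
End Texts.

Section Model.
Variables (R : realType) (A : finType) (N : nat).
(* p a s = p(s | ⊥a), s ∈ A ∪ {†} (None = †) *)
Variable p : seq A -> option A -> R.

Definition pi_cond (y x : L A N) : R :=
  if x == y then 1
  else if text_le x y then
    \prod_(size (syms x) <= i < size (syms y))
       p (take i (letters y)) (nth None (syms y) i)
  else 0.

(* ζ_t(x,y) = e^{-t d(x,y)} = π(y|x)^t  (with 0^t = 0 for t > 0) *)
Definition zeta (t : R) (x y : L A N) : R := (pi_cond y x) `^ t.

Definition zeta_mx (t : R) : 'M[R]_#|{: L A N}| :=
  \matrix_(i, j) zeta t (enum_val i) (enum_val j).

Definition magnitude (t : R) : R := \sum_i \sum_j (invmx (zeta_mx t)) i j.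
End Model.

Definition tsallis (R : realType) (I : finType) (t : R) (q : I -> R) : R :=
  if t == 1 then - \sum_i q i * ln (q i)
  else (t - 1)^-1 * (1 - \sum_i q i `^ t).

Definition is_pmf_family (R : realType) (A : finType) (N : nat)
  (p : seq A -> option A -> R) : Prop :=
  forall a : seq A, (size a + 1 <= N.-1)%N ->
    (forall s, 0 <= p a s) /\ \sum_s p a s = 1.

Arguments magnitude {R A} N p t.
Arguments is_pmf_family {R A} N p.

(* Main.v *)
Require Import Defs.
From HB Require Import structures.
From mathcomp Require Import all_boot all_order all_algebra.
From mathcomp Require Import all_classical all_reals all_analysis.
From mathcomp Require Import zify.
Import Order.TTheory GRing.Theory Num.Theory.
Local Open Scope ring_scope.
Set Implicit Arguments. Unset Strict Implicit.

Section Comb.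
Variables (A : finType) (N : nat).
Implicit Types x y : L A N.

Lemma size_letters x : size (letters x) = tag (val x).1.
Proof. by rewrite /letters size_tuple. Qed.

Lemma size_syms x : size (syms x) = (size (letters x) + finished x)%N.
Proof. by rewrite /syms size_cat size_map; case: (finished x). Qed.

Lemma letters_lt x : (size (letters x) < N)%N.
Proof. by rewrite size_letters. Qed.

Lemma finished_lt x : finished x -> (size (letters x) < N.-1)%N.
Proof. case: x => [[w b] /= H]; rewrite /finished /= => Hb.
by move: H; rewrite /Lpred /= Hb /letters /= size_tuple. Qed.

Lemma size_syms_le x : (size (syms x) <= N.-1)%N.
Proof.
rewrite size_syms; case Hf: (finished x).
  by have := finished_lt Hf; rewrite addn1.
by rewrite addn0 -ltnS; apply: leq_trans (letters_lt x) (leqSpred _).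
Qed.

Lemma syms_inj x y : syms x = syms y -> x = y.
Proof.
have Hl z : letters z = pmap id (syms z).
  rewrite /syms pmap_cat.
  have -> : pmap id (map Some (letters z)) = letters z by elim: (letters z) => //= a l ->.
  by case: (finished z); rewrite /= ?cats0.
have Hf z : finished z = (None \in syms z).
  rewrite /syms mem_cat; case: (finished z); rewrite /= ?inE ?eqxx ?orbT ?orbF //.
  apply/esym/negP => /mapP [].  by [].
move=> E.
have EL : letters x = letters y by rewrite !Hl E.
have EF : finished x = finished y by rewrite !Hf E.
case: x y E EL EF => [[[k tk] b] Hx] [[[k' tk'] b'] Hy] /= _.
rewrite /letters /finished /= => EL EF; subst b'.
have Ek : k = k' by apply/val_inj; rewrite /= -(size_tuple tk) -(size_tuple tk') EL.
subst k'. have Et : tk = tk' by apply/val_inj.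
subst tk'. by congr exist; apply: bool_irrelevance.
Qed.

Lemma prefix_eq (s t : seq (option A)) : prefix s t -> (size t <= size s)%N -> t = s.
Proof. by rewrite prefixE => /eqP E Hs; rewrite -E take_oversize. Qed.

Lemma text_le_refl x : text_le x x.
Proof. exact: prefix_refl. Qed.

Lemma text_lt_size {x y} : text_le x y -> x != y -> (size (syms x) < size (syms y))%N.
Proof.
move=> H Hne; rewrite ltnNge; apply/negP => Hs.
by move/negP: Hne; apply; apply/eqP/syms_inj/esym/prefix_eq.
Qed.

Lemma inT_max {x y} : inT x -> text_le x y -> y = x.
Proof.
rewrite /inT => HT Hle; apply: syms_inj; apply: (prefix_eq Hle).
case/orP: HT => [Hf|HN].
-
  have Hsx : size (syms x) = (size (letters x)).+1 by rewrite size_syms Hf addn1.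
  rewrite leqNgt; apply/negP => Hlt.
  have Hn : nth None (syms y) (size (letters x)) = None.
    move: Hle; rewrite /text_le prefixE => /eqP E.
    rewrite -(nth_take None (n0 := size (syms x))); last by rewrite Hsx.
    by rewrite E /syms Hf nth_cat size_map ltnn subnn.
  move: Hn; rewrite /syms nth_cat size_map.
  case: ltnP => H1.
    by case: (letters y) H1 => [|a l] // H1; rewrite (nth_map a).
  by move: Hlt; rewrite Hsx size_syms; case: (finished y) => /=; lia.
- by have := size_syms_le y; move/eqP: HN; rewrite /tlen; lia.
Qed.

Lemma notT {x} : ~~ inT x -> finished x = false /\ (size (letters x) + 1 <= N.-1)%N.
Proof.
rewrite /inT /tlen size_syms negb_or => /andP [Hf HN]; move/negbTE: Hf => Hf.
split=> //; move: HN; rewrite Hf addn0; have := letters_lt x; lia.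
Qed.

Lemma syms_notT {x} : ~~ inT x -> syms x = map Some (letters x).
Proof. by case/notT => Hf _; rewrite /syms Hf cats0. Qed.

Lemma mkL_ex (a : seq A) (b : bool) : (size a < N)%N -> (b ==> (size a < N.-1)%N) ->
  exists y : L A N, letters y = a /\ finished y = b.
Proof.
move=> H Hb.
exists (exist (@Lpred A N) (existT (fun k : 'I_N => k.-tuple A) (Ordinal H) (in_tuple a), b) Hb).
by [].
Qed.

Lemma child_ex {x} s : ~~ inT x -> exists y : L A N, syms y = rcons (syms x) s.
Proof.
move=> HT; have [Hf Hs] := notT HT; rewrite syms_notT //.
case: s => [c|].
- have H1 : (size (rcons (letters x) c) < N)%N by rewrite size_rcons; lia.
  have [y [Hl Hfy]] := mkL_ex (b := false) H1 isT.
  by exists y; rewrite /syms Hl Hfy cats0 map_rcons.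
- have H1 : (size (letters x) < N)%N by lia.
  have H2 : (true ==> (size (letters x) < N.-1))%N by rewrite /=; lia.
  have [y [Hl Hfy]] := mkL_ex H1 H2.
  by exists y; rewrite /syms Hl Hfy cats1.
Qed.

Definition child x s : L A N := odflt x [pick y | syms y == rcons (syms x) s].

Lemma childE {x} s : ~~ inT x -> syms (child x s) = rcons (syms x) s.
Proof.
move=> HT; rewrite /child; case: pickP => [y /eqP //|H].
by have [y Hy] := child_ex s HT; move: (H y); rewrite Hy eqxx.
Qed.

Lemma child_le {x} s {y} : ~~ inT x -> text_le (child x s) y -> text_le x y /\ x != y.
Proof.
move=> HT Hc; have Hs := childE s HT.
have Hxc : text_le x (child x s) by rewrite /text_le Hs prefix_rcons.
split; first exact: prefix_trans Hxc Hc.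
apply/eqP => E; subst y.
by have := size_prefix Hc; rewrite Hs size_rcons ltnn.
Qed.

Lemma dec {x y} : ~~ inT x -> text_le x y -> x != y ->
  let s0 := nth None (syms y) (size (syms x)) in
  [/\ text_le (child x s0) y, (forall s, s != s0 -> ~~ text_le (child x s) y),
     take (size (syms x)) (letters y) = letters x &
     (size (syms x) < size (syms y))%N].
Proof.
move=> HT Hle Hne s0.
have Hlt := text_lt_size Hle Hne.
have Hpre : take (size (syms x)) (syms y) = syms x by apply/eqP; rewrite -prefixE.
split.
- rewrite /text_le childE // prefixE size_rcons (take_nth None) // Hpre.
  exact: eqxx.
- move=> s Hs; apply/negP; rewrite /text_le childE // prefixE size_rcons => /eqP E.
  move/eqP: Hs; apply; rewrite /s0.
  by rewrite -(nth_take None (n0 := (size (syms x)).+1)) // E nth_rcons ltnn eqxx.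
- have Hk : (size (syms x) <= size (letters y))%N.
    by move: Hlt; rewrite (size_syms y); case: (finished y) => /=; lia.
  apply: (@inj_map _ _ Some); first by move=> ? ? [].
  set k := size (syms x) in Hk Hpre *.
  rewrite map_take -(syms_notT HT) -[RHS]Hpre /syms takel_cat //.
  by rewrite size_map.
- exact: Hlt.
Qed.

End Comb.

Section Model.
Variables (R : realType) (A : finType) (N : nat) (p : seq A -> option A -> R).
Hypothesis Hp : is_pmf_family N p.
Variable t : R.
Hypothesis Ht : 0 < t.
Implicit Types x y : L A N.

Lemma sum_enum (F : L A N -> R) : \sum_(i < #|{: L A N}|) F (enum_val i) = \sum_x F x.
Proof. by rewrite -big_enum_val. Qed.

Lemma p_ge0 a s : (size a + 1 <= N.-1)%N -> 0 <= p a s.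
Proof. by move=> H; case: (Hp H). Qed.

Lemma pi_ge0 x y : 0 <= pi_cond p y x.
Proof.
rewrite /pi_cond; case: ifP => // _; case: ifP => // _.
rewrite big_seq_cond; apply: prodr_ge0 => i /andP [Hi _].
move: Hi; rewrite mem_index_iota => /andP [_ Hi].
have := size_syms_le y => Hs.
apply: p_ge0; rewrite size_take; case: ifP; lia.
Qed.

Lemma pi_not_le x y : ~~ text_le x y -> pi_cond p y x = 0.
Proof.
move=> H; rewrite /pi_cond (negbTE H); case: eqP => // E; subst y.
by rewrite text_le_refl in H.
Qed.

Lemma zeta0 x y : ~~ text_le x y -> zeta p t x y = 0.
Proof. by move=> H; rewrite /zeta pi_not_le // powR0 // gt_eqF. Qed.

Lemma zeta_refl x : zeta p t x x = 1.
Proof. by rewrite /zeta /pi_cond eqxx powR1. Qed.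

Lemma zeta_dec x y : ~~ inT x ->
  zeta p t x y = (x == y)%:R + \sum_s p (letters x) s `^ t * zeta p t (child x s) y.
Proof.
move=> HT.
have Hc s y' : ~~ text_le x y' -> zeta p t (child x s) y' = 0.
  move=> H; apply: zeta0; apply/negP => /(child_le HT) [H' _].
  by rewrite H' in H.
case: (eqVneq x y) => [<-|Hne].
  rewrite zeta_refl big1 ?addr0 // => s _.
  rewrite zeta0 ?mulr0 //; apply/negP => /(child_le HT) [_].
  by rewrite eqxx.
case Hle: (text_le x y); last first.
  by rewrite zeta0 ?Hle // add0r big1 // => s _; rewrite Hc ?Hle // mulr0.
have [H1 H2 H3 H4] := dec HT Hle Hne.
set s0 := nth None (syms y) (size (syms x)) in H1 H2.
rewrite add0r (bigD1 s0) //= big1 ?addr0; last first.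
  by move=> s Hs; rewrite zeta0 ?mulr0 // H2.
set F := fun i => p (take i (letters y)) (nth None (syms y) i).
have Hpy : pi_cond p y x = F (size (syms x)) * \prod_((size (syms x)).+1 <= i < size (syms y)) F i.
  by rewrite /pi_cond (negbTE Hne) Hle (big_ltn H4).
have Hpc : pi_cond p y (child x s0) = \prod_((size (syms x)).+1 <= i < size (syms y)) F i.
  rewrite /pi_cond H1; case: eqP => [E|_].
    by rewrite big_geq // -E childE // size_rcons.
  by rewrite childE // size_rcons.
rewrite /zeta Hpy Hpc powRM //; last by rewrite -Hpc pi_ge0.
  by rewrite /F H3.
by rewrite /F; apply: p_ge0; rewrite size_take; case: ifP; have := size_syms_le y; lia.
Qed.

Definition w x : R := if inT x then 1 else 1 - \sum_s p (letters x) s `^ t.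

Definition S x : R := \sum_y zeta p t x y * w y.

Lemma S1 x : S x = 1.
Proof.
suff H : forall n x, (N - size (syms x) <= n)%N -> S x = 1 by exact: (H _ x (leqnn _)).
elim=> [|n IH] {}x Hn.
- case HT: (inT x).
  + rewrite /S (bigD1 x) //= big1 ?addr0; first by rewrite zeta_refl /w HT mul1r.
    move=> y Hy; rewrite zeta0 ?mul0r //; apply/negP => /(inT_max HT) E.
    by rewrite E eqxx in Hy.
  + have [_ Hs] := notT (negbT HT); move: Hn; rewrite syms_notT ?HT // size_map.
    by lia.
- case HT: (inT x).
  + rewrite /S (bigD1 x) //= big1 ?addr0; first by rewrite zeta_refl /w HT mul1r.
    move=> y Hy; rewrite zeta0 ?mul0r //; apply/negP => /(inT_max HT) E.
    by rewrite E eqxx in Hy.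
  + have HT' : ~~ inT x by rewrite HT.
    rewrite /S.
    under eq_bigr => y _ do rewrite (zeta_dec y HT') mulrDl.
    rewrite big_split /=.
    have -> : \sum_y (x == y)%:R * w y = w x.
      rewrite (bigD1 x) //= eqxx mul1r big1 ?addr0 // => y Hy.
      by rewrite eq_sym (negbTE Hy) mul0r.
    under eq_bigr => y _ do rewrite mulr_suml.
    rewrite exchange_big /=.
    under eq_bigr => s _ do (under eq_bigr => y _ do rewrite -mulrA; rewrite -mulr_sumr).
    have -> : \sum_s p (letters x) s `^ t * (\sum_y zeta p t (child x s) y * w y) =
              \sum_s p (letters x) s `^ t.
      apply: eq_bigr => s _; rewrite [X in _ * X](IH (child x s)) ?mulr1 //.
      rewrite childE // size_rcons; move: Hn; have := size_syms_le (child x s).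
      rewrite childE // size_rcons; lia.
    by rewrite /w HT subrK.
Qed.

Lemma zeta_unit : zeta_mx N p t \in unitmx.
Proof.
rewrite -row_free_unit -kermx_eq0; apply/eqP/matrixP => i j.
set u := row i (kermx (zeta_mx N p t)).
have Hu : u *m zeta_mx N p t = 0 by rewrite /u -row_mul mulmx_ker row0.
suff H : forall n (j : 'I_#|{: L A N}|), (size (syms (enum_val j)) <= n)%N -> u 0 j = 0.
  by move: (H _ j (leqnn _)); rewrite /u !mxE.
clearbody u.
have step (k : 'I_#|{: L A N}|) :
    (forall l, l != k -> text_le (enum_val l) (enum_val k) -> u 0 l = 0) -> u 0 k = 0.
  move=> Hl0; move/matrixP: (Hu) => /(_ 0 k).
  rewrite !mxE /zeta_mx (bigD1 k) //= !mxE zeta_refl mulr1 big1 ?addr0 // => l Hl.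
  rewrite !mxE; case Hle: (text_le (enum_val l) (enum_val k)).
    by rewrite Hl0 ?mul0r.
  by rewrite zeta0 ?Hle ?mulr0.
elim=> [|n IH] k Hk; apply: step => l Hl Hle;
  have Hne : enum_val l != enum_val k by apply/eqP => /enum_val_inj E; rewrite E eqxx in Hl.
  by have := text_lt_size Hle Hne; lia.
by rewrite IH //; have := text_lt_size Hle Hne; lia.
Qed.

Lemma magnitudeE : magnitude N p t = \sum_x w x.
Proof.
set W := \col_(i < #|{: L A N}|) w (enum_val i).
have HZW : zeta_mx N p t *m W = const_mx 1.
  apply/matrixP => i j; rewrite !mxE -(S1 (enum_val i)) /S -sum_enum.
  by apply: eq_bigr => k _; rewrite !mxE.
have := mulKmx zeta_unit W; rewrite HZW => HW.
rewrite /magnitude -sum_enum; apply: eq_bigr => i _.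
move/matrixP: HW => /(_ i 0); rewrite !mxE => <-.
by apply: eq_bigr => j _; rewrite mxE mulr1.
Qed.

End Model.

Theorem proposition3p9 (R : realType) (A : finType) (N : nat)
  (p : seq A -> option A -> R) :
  (1 <= N)%N -> is_pmf_family N p ->
  forall t : R, 0 < t ->
    magnitude N p t =
      (t - 1) * \sum_(x : L A N | ~~ inT x) tsallis t (p (letters x))
      + (#|[pred x : L A N | inT x]|)%:R.
Proof.
move=> _ Hp t Ht; rewrite (magnitudeE Hp Ht) (bigID (fun x => inT x)) /= addrC.
congr (_ + _).
  rewrite mulr_sumr; apply: eq_bigr => x HT.
  rewrite /w (negbTE HT) /tsallis; case: eqP => [->|Ht1].
    have [_ Hs] := notT HT; have [H0 H1] := Hp _ Hs.
    rewrite subrr mul0r; apply/eqP; rewrite subr_eq0 -{1}H1; apply/eqP.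
    by apply: eq_bigr => s _; rewrite powRr1.
  by rewrite mulrA mulfV ?mul1r // subr_eq0; apply/eqP.
rewrite (eq_bigr (fun _ => 1)); last by move=> x Hx; rewrite /w Hx.
by rewrite sumr_const.
Qed.
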